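(* Let $G$ be a finitely generated, torsion-free, $2$-step nilpotent group with Malcev basis $(A;C)=(a_1,\dots,a_n;c_1,\dots,c_m)$, $n\ge 2$. Assume $[a_i,a_j]\neq1$ for all $i\neq j$ and that $a_i$ is c-small for every $i=1,\dots,n$. Then the maximal ring of scalars of $G$ is isomorphic to $\mathbb{Z}$.
   Context: Commutators: $[g,h]=g^{-1}h^{-1}gh$. A Malcev basis is a pair $(A;C)$ with $C=\{c_1,\dots,c_m\}$ a basis of a free abelian subgroup with $G'\le\langle C\rangle\le Z(G)$ and $A=\{a_1,\dots,a_n\}$ such that $G/\langle C\rangle$ is free abelian with basis $\{a_i\langle C\rangle\}$. An element $g$ is c-small if its centralizer equals $\{g^t z\mid t\in\mathbb{Z},\ z\in Z(G)\}$. Rings are associative with identity. Let $f:G/Z(G)\times G/Z(G)\to G'$, $f(gZ(G),hZ(G))=[g,h]$. A commutative ring $R$ is a ring of scalars of $G$ if there are faithful actions of $R$ by endomorphisms on $M=G/Z(G)$ and $N=G'$ with $f(rx,y)=f(x,ry)=rf(x,y)$ for all $r\in R$, $x,y\in M$. Identifying each ring of scalars with its image in $\mathrm{End}(M)$, the maximal ring of scalars is the one containing all others. *)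

(* Defs.v *)
From HB Require Import structures.
From mathcomp Require Import all_boot all_algebra.
From mathcomp Require monoid.

Set Implicit Arguments.
Unset Strict Implicit.
Unset Printing Implicit Defensive.

Import GRing.Theory.

Section GroupDefs.
Variable G : groupType.

Local Notation gmul := (@monoid.mul G).
Local Notation ginv := (@monoid.inv G).
Local Notation g1 := (@monoid.one G).

Definition zexpg (g : G) (k : int) : G :=
  match k with
  | Posz n => monoid.natexp g n
  | Negz n => ginv (monoid.natexp g n.+1)
  end.

(* commutator [g,h] = g^-1 h^-1 g h  (library's monoid.commg) *)
Local Notation comm := (@monoid.commg G).

Inductive gen (S : G -> Prop) : G -> Prop :=
  | gen_one : gen S g1
  | gen_base g : S g -> gen S g
  | gen_inv g : gen S g -> gen S (ginv g)
  | gen_mul g h : gen S g -> gen S h -> gen S (gmul g h).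

Definition central (z : G) : Prop := forall g, gmul z g = gmul g z.

Definition derived : G -> Prop := gen (fun g => exists x y, g = comm x y).

Definition zprod (p : nat) (x : 'I_p -> G) (k : 'I_p -> int) : G :=
  foldr (fun j acc => gmul (zexpg (x j) (k j)) acc) g1 (enum 'I_p).

Definition span (p : nat) (x : 'I_p -> G) : G -> Prop :=
  gen (fun g => exists j, g = x j).

Definition finitely_generated : Prop :=
  exists (p : nat) (x : 'I_p -> G), forall g, span x g.

Definition torsion_free : Prop :=
  forall (g : G) (k : int), k <> 0%R -> zexpg g k = g1 -> g = g1.

(* nilpotent of class exactly 2: G' <= Z(G) and G is not abelian *)
Definition two_step_nilpotent : Prop :=
  (forall x y, central (comm x y)) /\ exists x y, comm x y <> g1.

Definition malcev_basis (n m : nat) (a : 'I_n -> G) (c : 'I_m -> G) : Prop :=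
  [/\ (
      forall g h, span c g -> span c h -> gmul g h = gmul h g) /\
      (forall k : 'I_m -> int, zprod c k = g1 -> forall j, k j = 0%R),
      (forall g, derived g -> span c g),
      (forall g, span c g -> central g),
      (* G/<C> is free abelian with basis {a_i <C>} :
         generation ... *)
      (forall g, exists k : 'I_n -> int, span c (gmul (ginv (zprod a k)) g)) &
      (* ... and independence *)
      (forall k : 'I_n -> int, span c (zprod a k) -> forall i, k i = 0%R)].

Definition c_small (g : G) : Prop :=
  forall h, gmul h g = gmul g h <->
            exists (t : int) (z : G), central z /\ h = gmul (zexpg g t) z.

End GroupDefs.

(* A faithful action of the ring R on the abelian group V by endomorphisms,
   i.e. an injective unital ring morphism R -> End(V), written out. *)
Definition faithful_endo_action (R : comPzRingType) (V : zmodType)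
    (act : R -> V -> V) : Prop :=
  [/\ (forall r x y, act r (x + y)%R = (act r x + act r y)%R),
      (forall x, act 1%R x = x),
      (forall r s x, act (r + s)%R x = (act r x + act s x)%R),
      (forall r s x, act (r * s)%R x = act r (act s x)) &
      (forall r s, (forall x, act r x = act s x) -> r = s)].

(* R (with actions actM on M = G/Z(G), actN on N = G') is a ring of scalars
   for the commutation map f : M x M -> N. *)
Definition ring_of_scalars (M N : zmodType) (f : M -> M -> N)
    (R : comPzRingType) (actM : R -> M -> M) (actN : R -> N -> N) : Prop :=
  [/\ faithful_endo_action actM, faithful_endo_action actN &
      forall r x y, f (actM r x) y = actN r (f x y) /\
                    f x (actM r y) = actN r (f x y)].

Definition quotient_by_center (G : groupType) (M : zmodType)
    (pi : G -> M) : Prop :=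
  [/\ (forall g h, pi (monoid.mul g h) = (pi g + pi h)%R),
      (forall x, exists g, pi g = x) &
      (forall g, pi g = 0%R <-> central g)].

Definition presents_derived (G : groupType) (N : zmodType)
    (iota : N -> G) : Prop :=
  [/\ (forall x y, iota (x + y)%R = monoid.mul (iota x) (iota y)),
      injective iota &
      (forall g, derived g <-> exists x, iota x = g)].

(* Main.v *)
Require Import Defs.
From HB Require Import structures.
From mathcomp Require Import all_boot all_algebra.
From mathcomp Require monoid.

Set Implicit Arguments.
Unset Strict Implicit.
Unset Printing Implicit Defensive.

Import GRing.Theory.

Lemma addfun_mulz (U V : zmodType) (h : U -> V)
  (hD : forall x y, h (x + y)%R = (h x + h y)%R) :
  forall x k, h (x *~ k)%R = (h x *~ k)%R.
Proof.
have h0 : h 0%R = 0%R.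
  by apply: (addrI (h 0%R)); rewrite -hD !addr0.
have hN : forall x, h (- x)%R = (- h x)%R.
  by move=> x; apply/eqP; rewrite -subr_eq0 opprK -hD addNr h0.
have hn : forall x n, h (x *+ n)%R = (h x *+ n)%R.
  move=> x; elim=> [|n IH]; first by rewrite !mulr0n h0.
  by rewrite !mulrS hD IH.
by move=> x [n|n] /=; rewrite ?hN hn.
Qed.

Section Main.
Variable G : groupType.
Local Notation gmul := (@monoid.mul G).
Local Notation ginv := (@monoid.inv G).
Local Notation g1 := (@monoid.one G).
Local Notation comm := (@monoid.commg G).

Hypothesis Hc : forall x y : G, central (comm x y).

Lemma commMl (g g' h : G) : comm (gmul g g') h = gmul (comm g h) (comm g' h).
Proof.
apply: (@monoid.mulgI G (gmul h (gmul g g'))).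
rewrite -monoid.commgC.
have E1 := monoid.commgC g' h; have E2 := monoid.commgC g h.
move: (Hc g h) (Hc g' h) E1 E2; move: (comm g h) (comm g' h) => c1 c2 H1 H2 E1 E2.
rewrite -monoid.mulgA E1 !monoid.mulgA E2.
rewrite -(monoid.mulgA _ c1 g') H1.
by rewrite !monoid.mulgA.
Qed.

Lemma commMr (g h h' : G) : comm g (gmul h h') = gmul (comm g h) (comm g h').
Proof.
rewrite -monoid.invgR commMl monoid.invgM !monoid.invgR.
by rewrite Hc.
Qed.

End Main.

Theorem theorem3p3 (G : groupType) (n m : nat)
    (a : 'I_n -> G) (c : 'I_m -> G)
    (Hfg : finitely_generated G) (Htf : torsion_free G)
    (Hnil : two_step_nilpotent G)
    (HAC : malcev_basis a c) (Hn : 2 <= n)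
    (Hcomm : forall i j : 'I_n, i <> j -> monoid.commg (a i) (a j) <> monoid.one)
    (Hsmall : forall i : 'I_n, c_small (a i))
    (M N : zmodType) (pi : G -> M) (iota : N -> G)
    (Hpi : quotient_by_center pi) (Hiota : presents_derived iota)
    (f : M -> M -> N)
    (Hf : forall g h : G, iota (f (pi g) (pi h)) = monoid.commg g h) :
  exists (actMZ : int -> M -> M) (actNZ : int -> N -> N),
    ring_of_scalars f actMZ actNZ /\
    forall (R : comPzRingType) (actM : R -> M -> M) (actN : R -> N -> N),
      ring_of_scalars f actM actN ->
      forall r : R, exists k : int, forall x : M, actM r x = actMZ k x.
Proof.
case: Hnil => Hc _.
case: Hpi => piM pisurj pi0.
case: Hiota => iotaD iota_inj iotader.
case: HAC => [[_ _] Hder Hcen Hgen _].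
have pi1 : pi monoid.one = 0%R.
  by apply/pi0 => g; rewrite monoid.mul1g monoid.mulg1.
have iota0 : iota 0%R = monoid.one.
  by apply: (@monoid.mulgI G (iota 0%R)); rewrite -iotaD addr0 monoid.mulg1.
have iotaN : forall y, iota (- y)%R = monoid.inv (iota y).
  move=> y; symmetry; apply: monoid.mulg1_eq; by rewrite -iotaD subrr.
have iotaz : forall y k, iota (y *~ k)%R = zexpg (iota y) k.
  have iotan : forall y n, iota (y *+ n)%R = monoid.natexp (iota y) n.
    move=> y; elim=> [|k IH]; first by rewrite mulr0n iota0.
    by rewrite mulrS iotaD IH monoid.expgS.
  by move=> y [k|k] /=; rewrite ?iotaN iotan.
have piV : forall g, pi (monoid.inv g) = (- pi g)%R.
  by move=> g; apply/eqP; rewrite -addr_eq0 -piM monoid.mulVg pi1.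
have piz : forall g k, pi (zexpg g k) = (pi g *~ k)%R.
  have pin : forall g n, pi (monoid.natexp g n) = (pi g *+ n)%R.
    move=> g; elim=> [|k IH]; first by rewrite mulr0n pi1.
    by rewrite mulrS monoid.expgS piM IH.
  by move=> g [k|k] /=; rewrite ?piV pin.
have fD1 : forall x y z, f (x + y)%R z = (f x z + f y z)%R.
  move=> x y z; case: (pisurj x) => g <-; case: (pisurj y) => g' <-.
  case: (pisurj z) => h <-.
  by apply: iota_inj; rewrite -piM iotaD !Hf (commMl Hc).
have fD2 : forall x y z, f z (x + y)%R = (f z x + f z y)%R.
  move=> x y z; case: (pisurj x) => g <-; case: (pisurj y) => g' <-.
  case: (pisurj z) => h <-.
  by apply: iota_inj; rewrite -piM iotaD !Hf (commMr Hc).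
have fz1 : forall x y k, f (x *~ k)%R y = (f x y *~ k)%R.
  by move=> x y; apply: (addfun_mulz (h := f^~ y)) => u v; apply: fD1.
have fz2 : forall x y k, f y (x *~ k)%R = (f y x *~ k)%R.
  by move=> x y; apply: (addfun_mulz (h := f y)) => u v; apply: fD2.
have f00 : forall x, f x x = 0%R.
  move=> x; case: (pisurj x) => g <-.
  by apply: iota_inj; rewrite Hf iota0 monoid.commgg.
have f0l : forall y, f 0%R y = 0%R.
  by move=> y; have := fz1 0%R y 0%R; rewrite !mulr0z.
have Ntf : forall (y : N) k, (y *~ k)%R = 0%R -> k <> 0%R -> y = 0%R.
  move=> y k e kn; apply: iota_inj; rewrite iota0.
  by apply: (Htf (iota y) k kn); rewrite -iotaz e iota0.
pose x i := pi (a i).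
have w_nz : forall i j, i <> j -> f (x i) (x j) <> 0%R.
  by move=> i j ij e; apply: (Hcomm _ _ ij); rewrite -Hf e iota0.
pose i0 : 'I_n := Ordinal (ltnW Hn).
pose i1 : 'I_n := Ordinal Hn.
have i01 : i0 <> i1 by move/(congr1 val).
have Mtf : forall k, (x i0 *~ k)%R = 0%R -> k = 0%R.
  move=> k e; have := fz1 (x i0) (x i1) k; rewrite e f0l => e'.
  case: (k =P 0%R) => // kn; exfalso.
  by apply: (w_nz i0 i1 i01); apply: (Ntf _ k (esym e') kn).
have stepA : forall (phi : M -> M) (psi : N -> N),
    (forall u v, phi (u + v)%R = (phi u + phi v)%R) ->
    (forall u v, psi (u + v)%R = (psi u + psi v)%R) ->
    (forall u v, f (phi u) v = psi (f u v) /\ f u (phi v) = psi (f u v)) ->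
    exists t : int, forall u, phi u = (u *~ t)%R.
  move=> phi psi phiD psiD Hcomp.
  have phiz := addfun_mulz phiD.
  have phi0 : phi 0%R = 0%R by have := phiz 0%R 0%R; rewrite !mulr0z.
  have psi0 : psi 0%R = 0%R by have := addfun_mulz psiD 0%R 0%R; rewrite !mulr0z.
  have ti : forall i, exists t, phi (x i) = (x i *~ t)%R.
    move=> i; case: (pisurj (phi (x i))) => h eh.
    have : monoid.commg (a i) h = monoid.one.
      by rewrite -Hf eh (Hcomp _ _).2 f00 psi0 iota0.
    move/eqP/monoid.commgP => cm.
    case: ((Hsmall i h).1 (esym cm)) => t [z [zc hE]].
    by exists t; rewrite -eh hE piM piz ((pi0 z).2 zc) addr0.
  case: (ti i0) => t Ht; exists t.
  have tall : forall i, phi (x i) = (x i *~ t)%R.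
    move=> i; case: (ti i) => s Hs; case: (eqVneq i i0) => [->//|ne].
    case: (Hcomp (x i) (x i0)) => e1 e2.
    rewrite Hs in e1; rewrite Ht in e2.
    have : (f (x i) (x i0) *~ (s - t))%R = 0%R.
      by rewrite mulrzBr -fz1 -fz2 e1 e2 subrr.
    move/Ntf => H.
    case: ((s - t)%R =P 0%R) => [st|nz]; last first.
      by exfalso; apply: (w_nz i i0 _ (H nz)); apply/eqP.
    by rewrite Hs; congr (_ *~ _)%R; apply/eqP; rewrite -subr_eq0 st.
  move=> y; case: (pisurj y) => g <-; case: (Hgen g) => k Hk.
  have Qprod : forall l : seq 'I_n,
      phi (pi (foldr (fun j acc => monoid.mul (zexpg (a j) (k j)) acc) monoid.one l))
      = (pi (foldr (fun j acc => monoid.mul (zexpg (a j) (k j)) acc) monoid.one l) *~ t)%R.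
    elim=> [|j l IH] /=; first by rewrite pi1 phi0 mul0rz.
    by rewrite !piM phiD IH piz phiz tall mulrzAC mulrzDl.
  have -> : g = monoid.mul (zprod a k) (monoid.mul (monoid.inv (zprod a k)) g).
    by rewrite monoid.mulVKg.
  by rewrite piM ((pi0 _).2 (Hcen _ Hk)) addr0; apply: Qprod.
exists (fun k u => (u *~ k)%R), (fun k u => (u *~ k)%R); split.
  split.
  - split => [r u v|u|r s u|r s u|r s H] /=.
    + exact: mulrzDl.
    + exact: mulr1z.
    + exact: mulrzDr.
    + by rewrite mulrC mulrzA.
    + have := H (x i0); move/eqP; rewrite -subr_eq0 -mulrzBr => /eqP /Mtf /eqP.
      by rewrite subr_eq0 => /eqP.
  - split => [r u v|u|r s u|r s u|r s H] /=.
    + exact: mulrzDl.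
    + exact: mulr1z.
    + exact: mulrzDr.
    + by rewrite mulrC mulrzA.
    + have := H (f (x i0) (x i1)); move/eqP; rewrite -subr_eq0 -mulrzBr => /eqP e.
      case: ((r - s)%R =P 0%R) => [st|nz]; last first.
        by exfalso; apply: (w_nz i0 i1 i01 (Ntf _ _ e nz)).
      by apply/eqP; rewrite -subr_eq0 st.
  - by move=> r u v; split; [apply: fz1 | apply: fz2].
move=> R actM actN [[aD _ _ _ _] [nD _ _ _ _] comp] r.
exact: (stepA (actM r) (actN r) (aD r) (nD r) (comp r)).
Qed.
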